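(* Let $n\ge1$. A valid configuration in $\Omega'_n$ contains no tile from the set $A_n\cup\hat A_n$.
   Context: $V_n=\{(v_0,v_1,v_2)\in\mathbb{Z}^3: 0\le v_0\le v_1\le 1,\ v_1\le v_2\le n+1\}$, elements written as words $v_0v_1v_2$. A Wang tile is $t=(a,b,c,d)$ with $\mathrm{RIGHT}(t)=a$, $\mathrm{TOP}(t)=b$, $\mathrm{LEFT}(t)=c$, $\mathrm{BOTTOM}(t)=d$; $\hat t=(b,a,d,c)$, $\hat S=\{\hat t:t\in S\}$. Define (as (right, top, left, bottom)): $W_n=\{(11(i+1),11(j+1),11i,11j):1\le i,j\le n\}$; $B'_n=\{(00(i+1),111,00i,11n):0\le i\le n\}$; $G_n=\{(01(i+1),111,00i,11(n+1)):0\le i\le n\}$; $Y_n=\{(01(i+1),112,01i,11(n+1)):1\le i\le n\}$; $A_n=\{(00(i+1),112,01i,11n):1\le i\le n\}$ (antigreen tiles); $J'_n=\{((0,k,l),(0,r,s),(0,s,r+n),(0,l,k+n)):(k,l),(r,s)\in\{(0,0),(0,1),(1,1)\}\}$. $\mathcal T'_n=W_n\cup B'_n\cup G_n\cup Y_n\cup A_n\cup\hat B'_n\cup\hat G_n\cup\hat Y_n\cup\hat A_n\cup J'_n$. $\Omega'_n$ is the set of configurations $c:\mathbb Z^2\to\mathcal T'_n$ with $\mathrm{RIGHT}(c(\mathbf m))=\mathrm{LEFT}(c(\mathbf m+\mathbf e_1))$ and $\mathrm{TOP}(c(\mathbf m))=\mathrm{BOTTOM}(c(\mathbf m+\mathbf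 e_2))$ for all $\mathbf m$. *)

(* Defs.v *)
From Stdlib Require Import ZArith.
Open Scope Z_scope.

Definition vert := (Z * Z * Z)%type.

(* Wang tile t = (a,b,c,d) with RIGHT t = a, TOP t = b, LEFT t = c, BOTTOM t = d. *)
Record tile := Tile { RIGHT : vert; TOP : vert; LEFT : vert; BOTTOM : vert }.

Definition hat (t : tile) : tile := Tile (TOP t) (RIGHT t) (BOTTOM t) (LEFT t).

Definition tileset := tile -> Prop.

Definition hatS (S : tileset) : tileset := fun t => exists u, S u /\ t = hat u.

Definition W (n : Z) : tileset := fun t =>
  exists i j, 1 <= i <= n /\ 1 <= j <= n /\
    t = Tile (1,1,i+1) (1,1,j+1) (1,1,i) (1,1,j).

Definition B' (n : Z) : tileset := fun t =>
  exists i, 0 <= i <= n /\ t = Tile (0,0,i+1) (1,1,1) (0,0,i) (1,1,n).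

Definition G (n : Z) : tileset := fun t =>
  exists i, 0 <= i <= n /\ t = Tile (0,1,i+1) (1,1,1) (0,0,i) (1,1,n+1).

Definition Y (n : Z) : tileset := fun t =>
  exists i, 1 <= i <= n /\ t = Tile (0,1,i+1) (1,1,2) (0,1,i) (1,1,n+1).

Definition A (n : Z) : tileset := fun t =>
  exists i, 1 <= i <= n /\ t = Tile (0,0,i+1) (1,1,2) (0,1,i) (1,1,n).

Definition Jpair (k l : Z) : Prop :=
  (k = 0 /\ l = 0) \/ (k = 0 /\ l = 1) \/ (k = 1 /\ l = 1).

Definition J' (n : Z) : tileset := fun t =>
  exists k l r s, Jpair k l /\ Jpair r s /\
    t = Tile (0,k,l) (0,r,s) (0,s,r+n) (0,l,k+n).

Definition T' (n : Z) : tileset := fun t =>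
  W n t \/ B' n t \/ G n t \/ Y n t \/ A n t \/
  hatS (B' n) t \/ hatS (G n) t \/ hatS (Y n) t \/ hatS (A n) t \/ J' n t.

Definition valid_config (n : Z) (c : Z * Z -> tile) : Prop :=
  (forall m, T' n (c m)) /\
  (forall x y, RIGHT (c (x, y)) = LEFT (c (x + 1, y))) /\
  (forall x y, TOP (c (x, y)) = BOTTOM (c (x, y + 1))).

(* Main.v *)
Require Import Defs.
From Stdlib Require Import ZArith Lia.
Open Scope Z_scope.

Definition v0 (v : vert) : Z := fst (fst v).

Ltac inj := repeat match goal with H : (_,_) = (_,_) |- _ => injection H; clear H; intros end.

Ltac crush H := unfold T', W, B', G, Y, A, hatS, J', Jpair in H;
  decompose [and or ex] H; clear H; subst; unfold hat, v0 in *; simpl in *; inj; subst; try lia.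

Section Tiles.
Variable n : Z.
Hypothesis hn : 1 <= n.

Lemma t_TB t : T' n t -> v0 (TOP t) = v0 (BOTTOM t).
Proof. intro H; crush H. Qed.
Lemma t_LR t : T' n t -> v0 (LEFT t) = v0 (RIGHT t).
Proof. intro H; crush H. Qed.
Lemma t_L01 t : T' n t -> v0 (LEFT t) = 0 \/ v0 (LEFT t) = 1.
Proof. intro H; crush H. Qed.
Lemma t_a t b : T' n t -> v0 (LEFT t) = 1 -> TOP t = (1,1,b) -> BOTTOM t = (1,1,b-1) /\ 2 <= b.
Proof. intros H H1 H2; crush H; split; try lia; f_equal; lia. Qed.
Lemma t_b t b : T' n t -> v0 (LEFT t) = 0 -> TOP t = (1,1,b) -> b = 1 \/ b = 2.
Proof. intros H H1 H2; crush H. Qed.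
Lemma t_c t z b : T' n t -> v0 (LEFT t) = 1 -> TOP t = (0,z,b) -> exists z', BOTTOM t = (0,z',b-1).
Proof. intros H H1 H2; crush H; eexists; f_equal; f_equal; lia. Qed.
Lemma t_d t z b : T' n t -> v0 (LEFT t) = 0 -> TOP t = (0,z,b) -> b = 0 \/ b = 1.
Proof. intros H H1 H2; crush H. Qed.
Lemma t_f t i : T' n t -> RIGHT t = (0,1,i) -> BOTTOM t = (1,1,n+1) \/ BOTTOM t = (0,1,1+n).
Proof. intros H H1; crush H; first [left; reflexivity | right; reflexivity]. Qed.
Lemma t_g1 t b : T' n t -> TOP t = (1,1,b) -> b = 1 -> v0 (LEFT t) = 0 -> exists j, LEFT t = (0,0,j).
Proof. intros H H1 H2 H3; crush H; eexists; reflexivity. Qed.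
Lemma t_g2 t b j : T' n t -> TOP t = (1,1,b) -> b = 2 -> v0 (LEFT t) = 0 -> RIGHT t = (0,0,j) -> A n t.
Proof. intros H H1 H2 H3 H4; crush H. exists x; split; [lia| f_equal; f_equal; lia]. Qed.
Lemma t_h t s j : T' n t -> RIGHT t = (0,s,j) -> 0 <= j ->
  v0 (BOTTOM t) = 0 \/ (exists s', LEFT t = (0,s',j-1) /\ 1 <= j).
Proof. intros H H1 H2; crush H; right; eexists; (split; [f_equal; f_equal; lia | lia]). Qed.
Lemma t_hat t : T' n t -> T' n (hat t).
Proof.
  intro H. unfold T' in *.
  destruct H as [H|[H|[H|[H|[H|[H|[H|[H|[H|H]]]]]]]]].
  - left. destruct H as (i&j&Hi&Hj&->). exists j, i. repeat split; lia.
  - do 5 right; left. exists t; auto.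
  - do 6 right; left. exists t; auto.
  - do 7 right; left. exists t; auto.
  - do 8 right; left. exists t; auto.
  - right; left. destruct H as (u&Hu&->). destruct u; exact Hu.
  - do 2 right; left. destruct H as (u&Hu&->). destruct u; exact Hu.
  - do 3 right; left. destruct H as (u&Hu&->). destruct u; exact Hu.
  - do 4 right; left. destruct H as (u&Hu&->). destruct u; exact Hu.
  - do 9 right. destruct H as (k&l&r&s&H1&H2&->). exists r, s, k, l. repeat split; auto.
Qed.
End Tiles.

Lemma zconst (f : Z -> Z) : (forall y, f (y+1) = f y) -> forall y y', f y = f y'.
Proof.
  intros Hf. assert (K : forall y, f y = f 0).
  { intro y. induction y using Z.peano_ind.
    - reflexivity.
    - rewrite <- IHy. replace (Z.succ y) with (y+1) by lia. apply Hf.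
    - rewrite <- IHy. rewrite <- (Hf (Z.pred y)). f_equal; lia. }
  intros; rewrite (K y), (K y'); reflexivity.
Qed.

Section Config.
Variable n : Z.
Hypothesis hn : 1 <= n.
Variable c : Z * Z -> tile.
Hypothesis Hc : valid_config n c.

Let HT m : T' n (c m). Proof. apply Hc. Qed.
Lemma Hv' x y : TOP (c (x, y-1)) = BOTTOM (c (x,y)).
Proof. destruct Hc as (_&_&H). rewrite H. replace (y-1+1) with y by lia; reflexivity. Qed.
Lemma Hh' x y : RIGHT (c (x-1, y)) = LEFT (c (x,y)).
Proof. destruct Hc as (_&H&_). rewrite H. replace (x-1+1) with x by lia; reflexivity. Qed.

Lemma rowc x x' y : v0 (LEFT (c (x,y))) = v0 (LEFT (c (x',y))).
Proof.
  apply (zconst (fun x => v0 (LEFT (c (x,y))))). intro z.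
  rewrite <- (Hh' (z+1) y). replace (z+1-1) with z by lia. symmetry; apply (t_LR n), HT.
Qed.
Lemma colc x y y' : v0 (BOTTOM (c (x,y))) = v0 (BOTTOM (c (x,y'))).
Proof.
  apply (zconst (fun y => v0 (BOTTOM (c (x,y))))). intro z.
  rewrite <- (Hv' x (z+1)). replace (z+1-1) with z by lia. apply (t_TB n), HT.
Qed.

Definition colF x := forall y, v0 (BOTTOM (c (x,y))) = 0.

Lemma CN (h : nat) : forall x y b,
  (forall t, 1 <= t <= Z.of_nat h -> v0 (LEFT (c (x, y-t))) = 1) ->
  v0 (LEFT (c (x, y - Z.of_nat h - 1))) = 0 ->
  BOTTOM (c (x,y)) = (1,1,b) ->
  TOP (c (x, y - Z.of_nat h - 1)) = (1,1,b - Z.of_nat h) /\ (b - Z.of_nat h = 1 \/ b - Z.of_nat h = 2).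
Proof.
  induction h as [|h IH]; intros x y b Hn Hf Hb.
  - simpl in *. replace (y-0-1) with (y-1) in * by lia. rewrite Hv', Hb.
    split; [f_equal; lia|]. eapply t_b; [apply HT|exact Hf|]. rewrite Hv'. rewrite Hb. f_equal; lia.
  - rewrite Nat2Z.inj_succ in *.
    assert (Hb' : TOP (c (x, y-1)) = (1,1,b)) by (rewrite Hv'; exact Hb).
    destruct (t_a n _ b (HT _) (Hn 1 ltac:(lia)) Hb') as [Hb1 _].
    replace (y - Z.succ (Z.of_nat h) - 1) with (y - 1 - Z.of_nat h - 1) in * by lia.
    destruct (IH x (y-1) (b-1)) as [E1 E2]; auto.
    + intros t Ht. replace (y-1-t) with (y-(t+1)) by lia. apply Hn; lia.
    + split; [rewrite E1; f_equal; lia | lia].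
Qed.

Lemma CF (h : nat) : forall x y z b,
  (forall t, 1 <= t <= Z.of_nat h -> v0 (LEFT (c (x, y-t))) = 1) ->
  v0 (LEFT (c (x, y - Z.of_nat h - 1))) = 0 ->
  BOTTOM (c (x,y)) = (0,z,b) ->
  b - Z.of_nat h = 0 \/ b - Z.of_nat h = 1.
Proof.
  induction h as [|h IH]; intros x y z b Hn Hf Hb.
  - simpl in *. replace (y-0-1) with (y-1) in * by lia.
    eapply t_d; [apply HT|exact Hf|]. rewrite Hv', Hb. f_equal; lia.
  - rewrite Nat2Z.inj_succ in *.
    assert (Hb' : TOP (c (x, y-1)) = (0,z,b)) by (rewrite Hv'; exact Hb).
    destruct (t_c n _ z b (HT _) (Hn 1 ltac:(lia)) Hb') as [z' Hb1].
    replace (y - Z.succ (Z.of_nat h) - 1) with (y - 1 - Z.of_nat h - 1) in * by lia.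
    assert (IH' := IH x (y-1) z' (b-1)).
    cut (b - 1 - Z.of_nat h = 0 \/ b - 1 - Z.of_nat h = 1); [lia|].
    apply IH'; auto.
    intros t Ht. replace (y-1-t) with (y-(t+1)) by lia. apply Hn; lia.
Qed.

Lemma EX (N : nat) : forall x y b, Z.to_nat b = N -> BOTTOM (c (x,y)) = (1,1,b) ->
  exists h : nat, (forall t, 1 <= t <= Z.of_nat h -> v0 (LEFT (c (x, y-t))) = 1) /\
    v0 (LEFT (c (x, y - Z.of_nat h - 1))) = 0.
Proof.
  induction N as [|N IH]; intros x y b HN Hb.
  - destruct (t_L01 n _ (HT (x,y-1))) as [H0|H1].
    + exists 0%nat. split; [intros; lia|]. simpl. replace (y-0-1) with (y-1) by lia. exact H0.
    + assert (Hb' : TOP (c (x, y-1)) = (1,1,b)) by (rewrite Hv'; exact Hb).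
      destruct (t_a n _ b (HT _) H1 Hb'). lia.
  - destruct (t_L01 n _ (HT (x,y-1))) as [H0|H1].
    + exists 0%nat. split; [intros; lia|]. simpl. replace (y-0-1) with (y-1) by lia. exact H0.
    + assert (Hb' : TOP (c (x, y-1)) = (1,1,b)) by (rewrite Hv'; exact Hb).
      destruct (t_a n _ b (HT _) H1 Hb') as [Hb1 Hb2].
      destruct (IH x (y-1) (b-1) ltac:(lia) Hb1) as (h & Hh1 & Hh2).
      exists (S h). rewrite Nat2Z.inj_succ. split.
      * intros t Ht. destruct (Z.eq_dec t 1) as [->|Hne]; [exact H1|].
        replace (y - t) with (y - 1 - (t-1)) by lia. apply Hh1; lia.
      * replace (y - Z.succ (Z.of_nat h) - 1) with (y - 1 - Z.of_nat h - 1) by lia. exact Hh2.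
Qed.

Lemma LX (N : nat) : forall x y s j, Z.to_nat j = N -> 0 <= j -> LEFT (c (x,y)) = (0,s,j) ->
  exists k : nat, colF (x - Z.of_nat k - 1).
Proof.
  induction N as [|N IH]; intros x y s j HN Hj HL;
  (destruct (t_h n _ s j (HT (x-1,y)) ltac:(rewrite Hh'; exact HL) Hj) as [H0 | (s' & HL' & Hj1)];
   [exists 0%nat; intro y'; simpl; replace (x-0-1) with (x-1) by lia; rewrite (colc _ y' y); exact H0|]).
  - lia.
  - destruct (IH (x-1) y s' (j-1) ltac:(lia) ltac:(lia) HL') as [k Hk].
    exists (S k). rewrite Nat2Z.inj_succ. replace (x - Z.succ (Z.of_nat k) - 1) with (x - 1 - Z.of_nat k - 1) by lia.
    exact Hk.
Qed.

Lemma DS x y : A n (c (x,y)) -> v0 (BOTTOM (c (x-1,y))) = 1 /\ exists y', A n (c (x-1,y')).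
Proof.
  intro HA. pose proof HA as (i & Hi & EA).
  assert (HL : LEFT (c (x,y)) = (0,1,i)) by (rewrite EA; reflexivity).
  assert (HB : BOTTOM (c (x,y)) = (1,1,n)) by (rewrite EA; reflexivity).
  destruct (EX (Z.to_nat n) x y n eq_refl HB) as (h & Hh1 & Hh2).
  destruct (CN h x y n Hh1 Hh2 HB) as [T1 T2].
  assert (Hh1' : forall t, 1 <= t <= Z.of_nat h -> v0 (LEFT (c (x-1, y-t))) = 1).
  { intros t Ht. rewrite (rowc _ x). auto. }
  assert (Hh2' : v0 (LEFT (c (x-1, y - Z.of_nat h - 1))) = 0) by (rewrite (rowc _ x); auto).
  destruct (t_f n _ i (HT (x-1,y)) ltac:(rewrite Hh'; exact HL)) as [B1|B1].
  - destruct (CN h (x-1) y (n+1) Hh1' Hh2' B1) as [U1 U2].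
    split; [rewrite B1; reflexivity|].
    exists (y - Z.of_nat h - 1).
    destruct (t_g1 n _ (n - Z.of_nat h) (HT _) T1 ltac:(lia) Hh2) as [j Hj].
    eapply (t_g2 n _ (n + 1 - Z.of_nat h) j (HT _) U1 ltac:(lia) Hh2').
    rewrite Hh'. exact Hj.
  - pose proof (CF h (x-1) y 1 (1+n) Hh1' Hh2' B1). lia.
Qed.

Lemma Q (k : nat) : forall x y, A n (c (x,y)) -> colF (x - Z.of_nat k - 1) -> False.
Proof.
  induction k as [|k IH]; intros x y HA HF.
  - destruct (DS x y HA) as [H1 _]. specialize (HF y). simpl in HF.
    replace (x-0-1) with (x-1) in HF by lia. lia.
  - destruct (DS x y HA) as [_ [y' Hy']]. apply (IH (x-1) y' Hy').
    rewrite Nat2Z.inj_succ in HF. replace (x - 1 - Z.of_nat k - 1) with (x - Z.succ (Z.of_nat k) - 1) by lia.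
    exact HF.
Qed.

Lemma noA m : ~ A n (c m).
Proof.
  destruct m as [x y]. intro HA. pose proof HA as (i & Hi & EA).
  assert (HL : LEFT (c (x,y)) = (0,1,i)) by (rewrite EA; reflexivity).
  destruct (LX (Z.to_nat i) x y 1 i eq_refl ltac:(lia) HL) as [k Hk].
  exact (Q k x y HA Hk).
Qed.
End Config.

Theorem lemma7p2 (n : Z) (hn : 1 <= n) (c : Z * Z -> tile) :
  valid_config n c ->
  forall m : Z * Z, ~ A n (c m) /\ ~ hatS (A n) (c m).
Proof.
  intros Hc m. split; [exact (noA n c Hc m)|].
  intros (u & Hu & Eu).
  set (c' := fun m : Z * Z => hat (c (snd m, fst m))).
  assert (Hc' : valid_config n c').
  { destruct Hc as (H1&H2&H3). split; [|split].
    - intro p. apply t_hat, H1.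
    - intros x y. unfold c', hat; simpl. apply H3.
    - intros x y. unfold c', hat; simpl. apply H2. }
  apply (noA n c' Hc' (snd m, fst m)). unfold c'; simpl.
  destruct m as [x y]; simpl. rewrite Eu. destruct u; exact Hu.
Qed.
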